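(* Let $b(r),h(r)$ be smooth positive functions on an interval of $r>0$ and consider the metric $ds^2=-b^2dt^2+\dfrac{h^2}{b^2}dr^2+r^2(d\theta^2+\sin^2\theta\,d\phi^2)$. Let $\kappa_1,\kappa_2,\kappa_3$ be constants and $$K_{kl}=(\kappa_2r^2-2\kappa_3b^2)u_ku_l+(\kappa_1+2\kappa_2r^2+\kappa_3b^2)g_{kl}-\kappa_2r^2\,\chi_k\chi_l .$$ Let $\mathscr L$ be a differentiable function of one variable (a nonlinear electrodynamics Lagrangian) with derivative $\mathscr L_F$, let $\mathbb E(r),\mathbb B(r)$ be functions, $F=\tfrac12(\mathbb B^2-\mathbb E^2)$, and $$T_{kl}=2(\mathbb E^2+\mathbb B^2)\,\mathscr L_F(F)\,(u_ku_l-\chi_k\chi_l)+2g_{kl}\left[\mathbb B^2\mathscr L_F(F)-\mathscr L(F)\right].$$ If the conformal Killing gravity field equations $R_{kl}-\tfrac12Rg_{kl}=T_{kl}+K_{kl}$ hold, then there is a constant $\kappa_4$ such that $$\frac{1}{h^2}=\kappa_3r^2+\kappa_4 .$$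
   Context: $u_k$ is the unit timelike covector with components $u_0=-b$ and all others zero; $\chi_k$ is the unit radial covector with $\chi_r=h/b$ and all others zero. $R_{kl}$ is the Ricci tensor and $R$ the scalar curvature. $T_{kl}$ is the stress-energy tensor of nonlinear electrodynamics with electric field magnitude $\mathbb E$ and magnetic field magnitude $\mathbb B$ in this static spherically symmetric setting. *)

(* Defs.v *)
From Stdlib Require Import Reals.
From Coquelicot Require Import Coquelicot.
Open Scope R_scope.

(** Points of the coordinate chart: x 0 = t, x 1 = r, x 2 = theta, x 3 = phi. *)
Definition point := nat -> R.

Definition upd (x : point) (i : nat) (s : R) : point :=
  fun j => if Nat.eqb j i then s else x j.

Definition pderiv (f : point -> R) (i : nat) (x : point) : R :=
  Derive (fun s => f (upd x i s)) (x i).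

Definition sum4 (f : nat -> R) : R := f 0%nat + f 1%nat + f 2%nat + f 3%nat.

Definition tensor2 := nat -> nat -> point -> R.

Definition christoffel (g ginv : tensor2) (a b c : nat) (x : point) : R :=
  sum4 (fun d => / 2 * ginv a d x *
     (pderiv (g d c) b x + pderiv (g d b) c x - pderiv (g b c) d x)).

Definition ricci (g ginv : tensor2) (b c : nat) (x : point) : R :=
  sum4 (fun a => pderiv (christoffel g ginv a b c) a x)
  - sum4 (fun a => pderiv (christoffel g ginv a a b) c x)
  + sum4 (fun a => sum4 (fun d =>
        christoffel g ginv a a d x * christoffel g ginv d b c x
      - christoffel g ginv a c d x * christoffel g ginv d a b x)).

Definition scalar_curv (g ginv : tensor2) (x : point) : R :=
  sum4 (fun a => sum4 (fun b => ginv a b x * ricci g ginv a b x)).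

Definition einstein (g ginv : tensor2) (k l : nat) (x : point) : R :=
  ricci g ginv k l x - / 2 * scalar_curv g ginv x * g k l x.

Definition sss_metric (b h : R -> R) : tensor2 := fun k l x =>
  match k, l with
  | O, O => - (b (x 1%nat)) ^ 2
  | S O, S O => (h (x 1%nat)) ^ 2 / (b (x 1%nat)) ^ 2
  | S (S O), S (S O) => (x 1%nat) ^ 2
  | S (S (S O)), S (S (S O)) => (x 1%nat) ^ 2 * (sin (x 2%nat)) ^ 2
  | _, _ => 0
  end.

Definition sss_inv (b h : R -> R) : tensor2 := fun k l x =>
  match k, l with
  | O, O => - / (b (x 1%nat)) ^ 2
  | S O, S O => (b (x 1%nat)) ^ 2 / (h (x 1%nat)) ^ 2
  | S (S O), S (S O) => / (x 1%nat) ^ 2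
  | S (S (S O)), S (S (S O)) => / ((x 1%nat) ^ 2 * (sin (x 2%nat)) ^ 2)
  | _, _ => 0
  end.

Definition ucov (b : R -> R) (k : nat) (x : point) : R :=
  if Nat.eqb k 0 then - b (x 1%nat) else 0.
Definition chicov (b h : R -> R) (k : nat) (x : point) : R :=
  if Nat.eqb k 1 then h (x 1%nat) / b (x 1%nat) else 0.

Definition K_ckg (b h : R -> R) (k1 k2 k3 : R) : tensor2 := fun k l x =>
  let r := x 1%nat in
  (k2 * r ^ 2 - 2 * k3 * (b r) ^ 2) * ucov b k x * ucov b l x
  + (k1 + 2 * k2 * r ^ 2 + k3 * (b r) ^ 2) * sss_metric b h k l x
  - k2 * r ^ 2 * chicov b h k x * chicov b h l x.

Definition T_nled (b h : R -> R) (L Ef Bf : R -> R) : tensor2 := fun k l x =>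
  let r := x 1%nat in
  let F := / 2 * ((Bf r) ^ 2 - (Ef r) ^ 2) in
  2 * ((Ef r) ^ 2 + (Bf r) ^ 2) * Derive L F
    * (ucov b k x * ucov b l x - chicov b h k x * chicov b h l x)
  + 2 * sss_metric b h k l x * ((Bf r) ^ 2 * Derive L F - L F).

(* Main.v *)
Require Import Defs.
From Stdlib Require Import Reals Lra Lia Classical_Prop.
From Coquelicot Require Import Coquelicot.
Open Scope R_scope.

Definition pt (r th : R) : point := fun n => match n with 1%nat => r | 2%nat => th | _ => 0 end.

Lemma metric_pt b h i j y : sss_metric b h i j y = sss_metric b h i j (pt (y 1%nat) (y 2%nat)).
Proof. destruct i as [|[|[|[|i]]]]; destruct j as [|[|[|[|j]]]]; reflexivity. Qed.
Lemma inv_pt b h i j y : sss_inv b h i j y = sss_inv b h i j (pt (y 1%nat) (y 2%nat)).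
Proof. destruct i as [|[|[|[|i]]]]; destruct j as [|[|[|[|j]]]]; reflexivity. Qed.

Definition dG b h i j k r th : R :=
  match k with
  | 1%nat => Derive (fun s => sss_metric b h i j (pt s th)) r
  | 2%nat => Derive (fun s => sss_metric b h i j (pt r s)) th
  | _ => 0 end.

Lemma pderiv_metric b h i j k y : pderiv (sss_metric b h i j) k y = dG b h i j k (y 1%nat) (y 2%nat).
Proof.
  unfold pderiv.
  destruct k as [|[|[|k]]]; simpl dG.
  - rewrite <- (Derive_const (sss_metric b h i j y) (y 0%nat)). apply Derive_ext. intro s.
    rewrite (metric_pt b h i j (upd y 0%nat s)), (metric_pt b h i j y). reflexivity.
  - apply Derive_ext. intro s. rewrite (metric_pt b h i j (upd y 1%nat s)). reflexivity.
  - apply Derive_ext. intro s. rewrite (metric_pt b h i j (upd y 2%nat s)). reflexivity.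
  - rewrite <- (Derive_const (sss_metric b h i j y) (y (S (S (S k))))). apply Derive_ext. intro s.
    rewrite (metric_pt b h i j (upd y _ s)), (metric_pt b h i j y). reflexivity.
Qed.

Definition Gam b h a c1 c2 r th := sum4 (fun d => /2 * sss_inv b h a d (pt r th) *
  (dG b h d c2 c1 r th + dG b h d c1 c2 r th - dG b h c1 c2 d r th)).

Lemma chr_eq b h a c1 c2 y : christoffel (sss_metric b h) (sss_inv b h) a c1 c2 y = Gam b h a c1 c2 (y 1%nat) (y 2%nat).
Proof. unfold christoffel, Gam, sum4. rewrite !pderiv_metric.
  rewrite (inv_pt b h a 0 y), (inv_pt b h a 1 y), (inv_pt b h a 2 y), (inv_pt b h a 3 y). reflexivity. Qed.

Lemma pderiv_chr b h a c1 c2 e x : pderiv (christoffel (sss_metric b h) (sss_inv b h) a c1 c2) e x = Derive (fun s => Gam b h a c1 c2 (upd x e s 1%nat) (upd x e s 2%nat)) (x e).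
Proof. unfold pderiv. apply Derive_ext. intro s. apply chr_eq. Qed.


Definition good (b h : R -> R) (s : R) := 0 < s /\ 0 < b s /\ 0 < h s /\ ex_derive b s /\ ex_derive h s /\ ex_derive (Derive b) s /\ ex_derive (Derive h) s.

Ltac eta := repeat match goal with |- context [Derive (fun x => ?f x) ?r] => change (Derive (fun x => f x) r) with (Derive f r) end.

Lemma D1 b h r : good b h r -> Derive (fun s => h s ^ 2 / b s ^ 2) r =
  (2 * h r * Derive h r * b r ^ 2 - h r ^ 2 * (2 * b r * Derive b r)) / b r ^ 4.
Proof. intros (Hr & Hb & Hh & Db & Dh & _). apply is_derive_unique. auto_derive.
  - repeat split; auto; intro; nra.
  - eta. field. lra. Qed.
Lemma D2 b h r : good b h r -> Derive (fun s => - b s ^ 2) r = - (2 * b r * Derive b r).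
Proof. intros (Hr & Hb & Hh & Db & Dh & _). apply is_derive_unique. auto_derive.
  - repeat split; auto.
  - eta. ring. Qed.
Lemma D3 r : Derive (fun s => s ^ 2) r = 2 * r.
Proof. apply is_derive_unique. auto_derive; auto. ring. Qed.
Lemma D4 r th : Derive (fun s => s ^ 2 * sin th ^ 2) r = 2 * r * sin th ^ 2.
Proof. apply is_derive_unique. auto_derive; auto. ring. Qed.
Lemma D5 r th : Derive (fun s => r ^ 2 * sin s ^ 2) th = r ^ 2 * (2 * sin th * cos th).
Proof. apply is_derive_unique. auto_derive; auto. ring. Qed.

Ltac gsimp G := cbv beta iota zeta delta [Gam sum4 dG sss_metric sss_inv pt];
  rewrite ?Derive_const, ?(D1 _ _ _ G), ?(D2 _ _ _ G), ?D3, ?D4, ?D5.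

Lemma G100 b h s th : good b h s -> Gam b h 1 0 0 s th = b s ^ 3 * Derive b s / h s ^ 2.
Proof. intro G. gsimp G. destruct G as (Hr & Hb & Hh & _). field. lra. Qed.
Lemma G111 b h s th : good b h s -> Gam b h 1 1 1 s th = Derive h s / h s - Derive b s / b s.
Proof. intro G. gsimp G. destruct G as (Hr & Hb & Hh & _). field. lra. Qed.
Lemma G001 b h s th : good b h s -> Gam b h 0 0 1 s th = Derive b s / b s.
Proof. intro G. gsimp G. destruct G as (Hr & Hb & Hh & _). field. lra. Qed.
Lemma G221 b h s th : good b h s -> Gam b h 2 2 1 s th = / s.
Proof. intro G. gsimp G. destruct G as (Hr & Hb & Hh & _). field. lra. Qed.
Lemma G331 b h s th : good b h s -> sin th <> 0 -> Gam b h 3 3 1 s th = / s.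
Proof. intros G Hs. gsimp G. destruct G as (Hr & Hb & Hh & _). field. lra. Qed.
Lemma G200 b h r s : Gam b h 2 0 0 r s = 0.
Proof. cbv beta iota zeta delta [Gam sum4 dG sss_metric sss_inv pt]; rewrite ?Derive_const. ring. Qed.
Lemma G211 b h r s : Gam b h 2 1 1 r s = 0.
Proof. cbv beta iota zeta delta [Gam sum4 dG sss_metric sss_inv pt]; rewrite ?Derive_const. ring. Qed.

Lemma loc_good b h r th a c1 c2 F : locally r (good b h) ->
  (forall s, good b h s -> Gam b h a c1 c2 s th = F s) ->
  Derive (fun s => Gam b h a c1 c2 s th) r = Derive F r.
Proof. intros L E. apply Derive_ext_loc. eapply filter_imp; [|exact L]. intros s Gs. now apply E. Qed.

Lemma good_D b h r : good b h r -> ex_derive (fun x => Derive b x) r /\ ex_derive (fun x => Derive h x) r.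
Proof. intros (_&_&_&_&_&A&B). split; [exact A|exact B]. Qed.

Lemma DG100 b h r th : locally r (good b h) -> good b h r ->
  Derive (fun s => Gam b h 1 0 0 s th) r =
   (3 * b r ^ 2 * Derive b r ^ 2 + b r ^ 3 * Derive (Derive b) r) / h r ^ 2
   - 2 * b r ^ 3 * Derive b r * Derive h r / h r ^ 3.
Proof. intros L G. rewrite (loc_good _ _ _ _ _ _ _ _ L (fun s Gs => G100 b h s th Gs)).
  pose proof (good_D _ _ _ G) as [E1 E2].
  destruct G as (Hr & Hb & Hh & Db & Dh & _).
  apply is_derive_unique. auto_derive.
  - repeat split; auto; intro; nra.
  - eta. field. lra. Qed.
Lemma DG111 b h r th : locally r (good b h) -> good b h r ->
  Derive (fun s => Gam b h 1 1 1 s th) r =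
   Derive (Derive h) r / h r - Derive h r ^ 2 / h r ^ 2
   - Derive (Derive b) r / b r + Derive b r ^ 2 / b r ^ 2.
Proof. intros L G. rewrite (loc_good _ _ _ _ _ _ _ _ L (fun s Gs => G111 b h s th Gs)).
  pose proof (good_D _ _ _ G) as [E1 E2].
  destruct G as (Hr & Hb & Hh & Db & Dh & _).
  apply is_derive_unique. auto_derive.
  - repeat split; auto; intro; nra.
  - eta. field. lra. Qed.
Lemma DG001 b h r th : locally r (good b h) -> good b h r ->
  Derive (fun s => Gam b h 0 0 1 s th) r =
   Derive (Derive b) r / b r - Derive b r ^ 2 / b r ^ 2.
Proof. intros L G. rewrite (loc_good _ _ _ _ _ _ _ _ L (fun s Gs => G001 b h s th Gs)).
  pose proof (good_D _ _ _ G) as [E1 E2].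
  destruct G as (Hr & Hb & Hh & Db & Dh & _).
  apply is_derive_unique. auto_derive.
  - repeat split; auto; intro; nra.
  - eta. field. lra. Qed.
Lemma DG221 b h r th : locally r (good b h) -> good b h r ->
  Derive (fun s => Gam b h 2 2 1 s th) r = - / r ^ 2.
Proof. intros L G. rewrite (loc_good _ _ _ _ _ _ _ _ L (fun s Gs => G221 b h s th Gs)).
  destruct G as (Hr & Hb & Hh & Db & Dh & _).
  apply is_derive_unique. auto_derive.
  - repeat split; auto; intro; nra.
  - field. lra. Qed.
Lemma DG331 b h r th : locally r (good b h) -> good b h r -> sin th <> 0 ->
  Derive (fun s => Gam b h 3 3 1 s th) r = - / r ^ 2.
Proof. intros L G S. rewrite (loc_good _ _ _ _ _ _ _ _ L (fun s Gs => G331 b h s th Gs S)).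
  destruct G as (Hr & Hb & Hh & Db & Dh & _).
  apply is_derive_unique. auto_derive.
  - repeat split; auto; intro; nra.
  - field. lra. Qed.
Lemma DG200 b h r th : Derive (fun s => Gam b h 2 0 0 r s) th = 0.
Proof. rewrite <- (Derive_const 0 th). apply Derive_ext. intro. apply G200. Qed.
Lemma DG211 b h r th : Derive (fun s => Gam b h 2 1 1 r s) th = 0.
Proof. rewrite <- (Derive_const 0 th). apply Derive_ext. intro. apply G211. Qed.

Lemma R00 b h r : locally r (good b h) -> good b h r ->
  ricci (sss_metric b h) (sss_inv b h) 0 0 (pt r (PI/2)) =
  ((3 * b r ^ 2 * Derive b r ^ 2 + b r ^ 3 * Derive (Derive b) r) / h r ^ 2
   - 2 * b r ^ 3 * Derive b r * Derive h r / h r ^ 3)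
  + b r ^ 3 * Derive b r / h r ^ 2 * (Derive h r / h r + 2 / r - 2 * Derive b r / b r).
Proof. intros L G.
  unfold ricci, sum4. rewrite !pderiv_chr, !chr_eq.
  cbv beta iota zeta delta [upd Nat.eqb pt].
  rewrite ?Derive_const, (DG100 _ _ _ _ L G), DG200.
  gsimp G. rewrite sin_PI2, cos_PI2.
  destruct G as (Hr & Hb & Hh & _). field. lra. Qed.

Lemma R11 b h r : locally r (good b h) -> good b h r ->
  ricci (sss_metric b h) (sss_inv b h) 1 1 (pt r (PI/2)) =
  - (Derive (Derive b) r / b r - Derive b r ^ 2 / b r ^ 2)
  + (Derive h r / h r + 2 / r) * (Derive h r / h r - Derive b r / b r)
  - (Derive b r / b r) ^ 2 - (Derive h r / h r - Derive b r / b r) ^ 2.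
Proof. intros L G.
  unfold ricci, sum4. rewrite !pderiv_chr, !chr_eq.
  cbv beta iota zeta delta [upd Nat.eqb pt].
  assert (S : sin (PI/2) <> 0) by (rewrite sin_PI2; lra).
  rewrite ?Derive_const, (DG111 _ _ _ _ L G), (DG001 _ _ _ _ L G), (DG221 _ _ _ _ L G), (DG331 _ _ _ _ L G S), DG211.
  gsimp G. rewrite sin_PI2, cos_PI2.
  destruct G as (Hr & Hb & Hh & _). field. lra. Qed.

Theorem proposition11 (I : R -> Prop) (b h : R -> R) (k1 k2 k3 : R)
  (L Ef Bf : R -> R) :
  (forall r, I r -> 0 < r) ->
  (forall r, I r -> exists eps : posreal, forall s, Rabs (s - r) < eps -> I s) ->
  (forall r s q, I r -> I q -> r <= s <= q -> I s) ->
  (forall r, I r -> 0 < b r /\ 0 < h r) ->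
  (forall (n : nat) r, I r -> ex_derive_n b n r /\ ex_derive_n h n r) ->
  (forall F, ex_derive L F) ->
  (forall x : point, I (x 1%nat) -> 0 < x 2%nat < PI ->
     forall k l : nat, (k < 4)%nat -> (l < 4)%nat ->
     einstein (sss_metric b h) (sss_inv b h) k l x
       = T_nled b h L Ef Bf k l x + K_ckg b h k1 k2 k3 k l x) ->
  exists k4 : R, forall r, I r -> 1 / (h r) ^ 2 = k3 * r ^ 2 + k4.
Proof.
  intros HI Hopen Hconv Hpos Hsm HL Heq.
  assert (Good : forall s, I s -> good b h s).
  { intros s Is. destruct (Hpos s Is) as [Pb Ph].
    destruct (Hsm 1%nat s Is) as [B1 H1]. destruct (Hsm 2%nat s Is) as [B2 H2].
    repeat split; auto. }
  assert (Loc : forall r, I r -> locally r (good b h)).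
  { intros r Ir. destruct (Hopen r Ir) as [eps He]. exists eps. intros y Hy.
    apply Good, He. exact Hy. }
  assert (ODE : forall r, I r -> Derive h r = - k3 * r * h r ^ 3).
  { intros r Ir. pose proof (Good r Ir) as G. pose proof (Loc r Ir) as Lr.
    assert (Ix : I (pt r (PI/2) 1%nat)) by exact Ir.
    assert (Tx : 0 < pt r (PI/2) 2%nat < PI) by (simpl; pose proof PI_RGT_0; lra).
    pose proof (Heq _ Ix Tx 0%nat 0%nat ltac:(lia) ltac:(lia)) as H0.
    pose proof (Heq _ Ix Tx 1%nat 1%nat ltac:(lia) ltac:(lia)) as H1.
    unfold einstein in H0, H1. rewrite (R00 _ _ _ Lr G) in H0. rewrite (R11 _ _ _ Lr G) in H1.
    set (S := scalar_curv _ _ _) in H0, H1.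
    cbv beta iota zeta delta [T_nled K_ckg ucov chicov sss_metric pt Nat.eqb] in H0, H1.
    destruct G as (Hr & Hb & Hh & _).
    match type of H0 with ?a0 = ?c0 => match type of H1 with ?a1 = ?c1 =>
      assert (E : -2 * b r ^ 2 * Derive h r / (r * h r ^ 3) = 2 * k3 * b r ^ 2);
      [ transitivity (- a0 / b r ^ 2 - b r ^ 2 * a1 / h r ^ 2);
        [ field; lra | rewrite H0, H1; field; lra ] | ] end end.
    assert (Dh : Derive h r = (-2 * b r ^ 2 * Derive h r / (r * h r ^ 3)) * (- (r * h r ^ 3) / (2 * b r ^ 2))) by (field; lra).
    rewrite Dh, E. field. lra. }
  set (f := fun s => 1 / h s ^ 2 - k3 * s ^ 2).
  assert (Df : forall s, I s -> is_derive f s 0).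
  { intros s Is. destruct (Good s Is) as (Hr & Hb & Hh & Db & Dh & _).
    unfold f. auto_derive.
    - repeat split; auto; intro; nra.
    - eta. rewrite (ODE s Is). field. lra. }
  destruct (Classical_Prop.classic (exists r0, I r0)) as [[r0 I0]|NE].
  2:{ exists 0. intros r Ir. exfalso. apply NE. now exists r. }
  exists (f r0). intros r Ir.
  assert (Iin : forall x, Rmin r0 r <= x <= Rmax r0 r -> I x).
  { intros x Hx. apply (Hconv (Rmin r0 r) x (Rmax r0 r)); auto;
    unfold Rmin, Rmax; destruct (Rle_dec r0 r); auto. }
  destruct (MVT_gen f r0 r (fun _ => 0)) as [c [_ Hc]].
  - intros x Hx. apply Df, Iin. lra.
  - intros x Hx. apply continuity_pt_filterlim. apply (@ex_derive_continuous R_AbsRing R_NormedModule f x).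
    exists 0. apply Df, Iin. exact Hx.
  - unfold f in Hc |- *. lra.
Qed.
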